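(* Let $S=S^T\in\mathbb{R}^{n\times n}$ and $T=\begin{pmatrix}I&S\\ 0&I\end{pmatrix}\in\mathbb{R}^{2n\times 2n}$, and let $h>0$. Then each of the linear maps $x\mapsto Tx$ and $x\mapsto T^Tx$ on $\mathbb{R}^{2n}$ equals a P-SympNet of degree $2$ with time step $h$ and at most $n$ layers.
   Context: $x=(p,q)\in\mathbb{R}^{2n}$, $J=\begin{pmatrix}0&-I\\ I&0\end{pmatrix}$. A P-SympNet of degree $d$ with $k$ layers and time step $h$ is a composition $\phi^{H_k}_h\circ\cdots\circ\phi^{H_1}_h$ where $H_i(x)=\alpha_i(w_i^Tx)$ with $w_i\in\mathbb{R}^{2n}$ and $\alpha_i(z)=\sum_{j=1}^d a_{ij}z^j$ a real univariate polynomial; each layer is the exact flow of $\dot x=J\nabla H_i(x)$, given explicitly by $\phi^{H_i}_h(x)=x+h\,\alpha_i'(w_i^Tx)\,Jw_i$. *)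

(* Defs.v *)
From mathcomp Require Import all_boot all_order all_algebra.
From mathcomp Require Import reals.
Set Implicit Arguments. Unset Strict Implicit. Unset Printing Implicit Defensive.
Import Order.TTheory GRing.Theory Num.Theory.
Local Open Scope ring_scope.

Section PSymp.
Variable R : realType.
Variable n : nat.

(* J = [[0, -I], [I, 0]] on R^{2n}, x = (p, q) as a column vector of size n + n *)
Definition Jmx : 'M[R]_(n + n) := block_mx 0 (- 1%:M) 1%:M 0.

Definition Tmx (S : 'M[R]_n) : 'M[R]_(n + n) := block_mx 1%:M S 0 1%:M.

Definition is_alpha (d : nat) (alpha : {poly R}) : Prop :=
  alpha`_0 = 0 /\ (size alpha <= d.+1)%N.

(* One layer phi_h^{H}, H(x) = alpha(w^T x):
   phi(x) = x + h * alpha'(w^T x) * J w *)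
Definition psymp_layer (h : R) (w : 'cV[R]_(n + n)) (alpha : {poly R})
  (x : 'cV[R]_(n + n)) : 'cV[R]_(n + n) :=
  x + (h * (alpha^`()).[(w^T *m x) 0 0]) *: (Jmx *m w).

(* A P-SympNet is a list of layers [(w_1, alpha_1); ...; (w_k, alpha_k)];
   it computes phi_k o ... o phi_1 (first layer applied first). *)
Definition psympnet_eval (h : R) (layers : seq ('cV[R]_(n + n) * {poly R}))
  (x : 'cV[R]_(n + n)) : 'cV[R]_(n + n) :=
  foldl (fun y l => psymp_layer h l.1 l.2 y) x layers.

Definition is_psympnet (d : nat) (layers : seq ('cV[R]_(n + n) * {poly R})) : Prop :=
  forall l, l \in layers -> is_alpha d l.2.

End PSymp.

(* Main.v *)
Require Import Defs.
From mathcomp Require Import all_boot all_order all_algebra.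
From mathcomp Require Import reals.
From mathcomp Require Import ring.
Import Order.TTheory GRing.Theory Num.Theory.
Local Open Scope ring_scope.

Lemma quad_delta (F : numFieldType) n (A : 'M[F]_n) i j :
  ((delta_mx i 0)^T *m A *m delta_mx j 0 : 'M_1) 0 0 = A i j.
Proof. by rewrite trmx_delta -rowE -colE !mxE. Qed.

Lemma exists_nondeg (F : numFieldType) n (S : 'M[F]_n) :
  S^T = S -> S != 0 -> exists v : 'cV[F]_n, (v^T *m S *m v) 0 0 != 0.
Proof.
move=> sS nz.
have [i [j Sij]] : exists i j, S i j != 0.
  case: (boolP [exists i, exists j, S i j != 0]) => [/existsP[i /existsP[j H]]|H].
    by exists i, j.
  exfalso; apply/negP: nz; rewrite negbK; apply/eqP/matrixP => i j; rewrite mxE.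
  by apply/eqP; move/existsPn: H => /(_ i)/existsPn/(_ j); rewrite negbK.
have [Sii|/negPn/eqP Sii] := boolP (S i i != 0).
  by exists (delta_mx i 0); rewrite quad_delta.
have [Sjj|/negPn/eqP Sjj] := boolP (S j j != 0).
  by exists (delta_mx j 0); rewrite quad_delta.
exists (delta_mx i 0 + delta_mx j 0).
rewrite [(_ + _)^T]linearD /= !mulmxDl !mulmxDr.
have E (A B : 'M[F]_1) : (A + B) 0 0 = A 0 0 + B 0 0 by rewrite mxE.
rewrite !E !quad_delta Sii Sjj.

have -> : S j i = S i j by rewrite -[in LHS]sS mxE.
by rewrite add0r addr0 -mulr2n mulrn_eq0 negb_or /= Sij.
Qed.

Lemma sym_decomp (F : numFieldType) n k : forall (S : 'M[F]_n),
  S^T = S -> (\rank S <= k)%N ->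
  exists L : seq (F * 'cV[F]_n), (size L <= k)%N /\
    S = \sum_(l <- L) l.1 *: (l.2 *m l.2^T).
Proof.
elim: k => [|k IH] S sS rk.
  exists [::]; split => //; rewrite big_nil; apply/eqP; rewrite -mxrank_eq0.
  by rewrite -leqn0.
have [->|nz] := eqVneq S 0.
  by exists [::]; rewrite big_nil.
have [v cn0] := @exists_nondeg _ _ S sS nz.
set c := (v^T *m S *m v) 0 0 in cn0.
set u := S *m v.
set S' := S - c^-1 *: (u *m u^T).
have uT : u^T = v^T *m S by rewrite /u trmx_mul sS.
have sS' : S'^T = S'.
  by rewrite /S' linearB /= linearZ /= trmx_mul trmxK sS.
have S'E : S' = (1%:M - c^-1 *: (u *m v^T)) *m S.
  by rewrite mulmxBl mul1mx -scalemxAl -mulmxA -uT.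
have uTv : u^T *m v = c%:M by rewrite uT [LHS]mx11_scalar.
have S'v : S' *m v = 0.
  rewrite /S' mulmxBl -/u -scalemxAl -mulmxA uTv mul_mx_scalar scalerA.
  by rewrite mulVf // scale1r subrr.
have lt : (\rank S' < \rank S)%N.
  apply: rank_ltmx; rewrite ltmxE; apply/andP; split.
    by rewrite S'E submxMl.
  apply/negP => /submxP [D SE].
  have : u = 0 by rewrite /u SE -mulmxA S'v mulmx0.
  move=> u0; move: cn0; rewrite /c -mulmxA -/u u0 mulmx0 mxE.
  by rewrite eqxx.
have rk' : (\rank S' <= k)%N by rewrite -ltnS (leq_trans lt rk).
have [L [sL LE]] := IH S' sS' rk'.
exists ((c^-1, u) :: L); split => //.
by rewrite big_cons /= -LE addrC subrK.
Qed.

Section Main.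
Variable R : realType.
Variable n : nat.

Lemma layer_up h (v p q : 'cV[R]_n) a :
  psymp_layer h (col_mx 0 v) (a *: 'X^2) (col_mx p q) =
  col_mx (p - (h * (a * ((v^T *m q) 0 0 *+ 2))) *: v) q.
Proof.
rewrite /psymp_layer /Jmx mul_block_col tr_col_mx mul_row_col linear0 mul0mx add0r.
rewrite derivZ derivXn /= hornerZ hornerMn expr1 hornerX.
rewrite !mulmx0 mul0mx !add0r mulNmx mul1mx.
by rewrite scale_col_mx add_col_mx scaler0 addr0 scalerN.
Qed.

Lemma layer_low h (v p q : 'cV[R]_n) a :
  psymp_layer h (col_mx v 0) (a *: 'X^2) (col_mx p q) =
  col_mx p (q + (h * (a * ((v^T *m p) 0 0 *+ 2))) *: v).
Proof.
rewrite /psymp_layer /Jmx mul_block_col tr_col_mx mul_row_col linear0 mul0mx addr0.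
rewrite derivZ derivXn /= hornerZ hornerMn expr1 hornerX.
rewrite !mulmx0 mul0mx ?addr0 ?add0r mul1mx.
by rewrite scale_col_mx add_col_mx scaler0 addr0.
Qed.

Lemma rank1_apply (c : R) (v q : 'cV[R]_n) :
  (c *: (v *m v^T)) *m q = (c * (v^T *m q) 0 0) *: v.
Proof.
by rewrite -scalemxAl -mulmxA {1}[v^T *m q]mx11_scalar mul_mx_scalar scalerA.
Qed.

Lemma eval_up h (hn0 : h != 0) (L : seq (R * 'cV[R]_n)) (p q : 'cV[R]_n) :
  psympnet_eval h [seq (col_mx 0 l.2, (- (l.1 / (h *+ 2))) *: 'X^2) | l <- L]
     (col_mx p q) = col_mx (p + (\sum_(l <- L) l.1 *: (l.2 *m l.2^T)) *m q) q.
Proof.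
rewrite /psympnet_eval.
elim: L p => [|[c v] L IH] p /=; first by rewrite big_nil mul0mx addr0.
rewrite layer_up IH big_cons /= mulmxDl rank1_apply addrA.
have -> : h * (- (c / (h *+ 2)) * ((v^T *m q) 0 0 *+ 2)) = - (c * (v^T *m q) 0 0).
  by field.
by rewrite scaleNr opprK.
Qed.

Lemma eval_low h (hn0 : h != 0) (L : seq (R * 'cV[R]_n)) (p q : 'cV[R]_n) :
  psympnet_eval h [seq (col_mx l.2 0, (l.1 / (h *+ 2)) *: 'X^2) | l <- L]
     (col_mx p q) = col_mx p (q + (\sum_(l <- L) l.1 *: (l.2 *m l.2^T)) *m p).
Proof.
rewrite /psympnet_eval.
elim: L q => [|[c v] L IH] q /=; first by rewrite big_nil mul0mx addr0.
rewrite layer_low IH big_cons /= mulmxDl rank1_apply addrA.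
have -> : h * ((c / (h *+ 2)) * ((v^T *m p) 0 0 *+ 2)) = c * (v^T *m p) 0 0.
  by field.
by [].
Qed.
End Main.

Lemma alphaX2 (R : realType) (a : R) : is_alpha 2 (a *: 'X^2).
Proof.
split; first by rewrite coefZ coefXn mulr0.
by apply: leq_trans (size_scale_leq _ _) _; rewrite size_polyXn.
Qed.

Theorem mainTheorem9 (R : realType) (n : nat) (S : 'M[R]_n) (h : R) :
  S^T = S -> 0 < h ->
  (exists layers : seq ('cV[R]_(n + n) * {poly R}),
      is_psympnet 2 layers /\ (size layers <= n)%N /\
      forall x : 'cV[R]_(n + n), psympnet_eval h layers x = Tmx S *m x) /\
  (exists layers : seq ('cV[R]_(n + n) * {poly R}),
      is_psympnet 2 layers /\ (size layers <= n)%N /\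
      forall x : 'cV[R]_(n + n), psympnet_eval h layers x = (Tmx S)^T *m x).
Proof.
move=> sS hp; have hn0 : h != 0 by rewrite gt_eqF.
have [L [sL SE]] := @sym_decomp _ n n S sS (rank_leq_col S).
split.
  exists [seq (col_mx 0 l.2, (- (l.1 / (h *+ 2))) *: 'X^2) | l <- L]; split.
    by move=> l /mapP [l' _ ->]; apply: alphaX2.
  split; first by rewrite size_map.
  move=> x; rewrite -[x]vsubmxK eval_up // -SE /Tmx mul_block_col.
  by rewrite !mul1mx mul0mx add0r addrC.
exists [seq (col_mx l.2 0, (l.1 / (h *+ 2)) *: 'X^2) | l <- L]; split.
  by move=> l /mapP [l' _ ->]; apply: alphaX2.
split; first by rewrite size_map.
move=> x; rewrite -[x]vsubmxK eval_low // -SE /Tmx tr_block_mx mul_block_col.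
by rewrite !tr_scalar_mx sS trmx0 !mul1mx mul0mx addr0 addrC.
Qed.
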